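(* Let $k\ge1$ and $n\ge0$ be integers. Every uniformly $k$-dense flag complex with at least $n(k+1)+1$ vertices is $(n,k)$-grounded.
   Context: A flag complex $X$ is uniformly $k$-dense if every vertex of $X$ is adjacent to all but at most $k$ other vertices. A simplex $\Delta$ of $X$ is a $k$-ground for $X$ if every vertex of $X$ is adjacent to all but at most $k$ vertices of $\Delta$; $X$ is $(n,k)$-grounded if it contains an $n$-simplex that is a $k$-ground for $X$. *)

(* Defs.v *)
From mathcomp Require Import all_boot.
Set Implicit Arguments. Unset Strict Implicit. Unset Printing Implicit Defensive.

(* A flag complex is determined by its 1-skeleton: a finite simple graph on
   the vertex type T, given by a symmetric irreflexive adjacency relation adj.
   Its simplices are the nonempty cliques; an n-simplex is a clique with
   exactly n+1 vertices. *)

Definition simple_graph (T : finType) (adj : rel T) : Prop :=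
  symmetric adj /\ irreflexive adj.

Definition is_clique (T : finType) (adj : rel T) (D : {set T}) : Prop :=
  forall x y, x \in D -> y \in D -> x != y -> adj x y.

Definition is_simplex (T : finType) (adj : rel T) (n : nat) (D : {set T}) : Prop :=
  is_clique adj D /\ #|D| = n.+1.

Definition uniformly_dense (T : finType) (adj : rel T) (k : nat) : Prop :=
  forall v : T, #|[set w | (w != v) && ~~ adj v w]| <= k.

Definition is_ground (T : finType) (adj : rel T) (k : nat) (D : {set T}) : Prop :=
  forall v : T, #|[set w in D | ~~ adj v w]| <= k.

Definition grounded (T : finType) (adj : rel T) (n k : nat) : Prop :=
  exists D : {set T}, is_simplex adj n D /\ is_ground adj k D.

(* Main.v *)
Require Import Defs.
From mathcomp Require Import all_boot.
From mathcomp Require Import zify.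

Lemma clique_exists (k : nat) (T : finType) (adj : rel T) :
  simple_graph adj -> uniformly_dense adj k ->
  forall n (S : {set T}), n * k.+1 + 1 <= #|S| ->
  exists D : {set T}, D \subset S /\ is_simplex adj n D.
Proof.
move=> [sym irr] dense; elim=> [|n IH] S hS.
  have : 0 < #|S| by lia.
  case/card_gt0P=> x xS; exists [set x]; split; first by rewrite sub1set.
  split; last by rewrite cards1.
  by move=> a b; rewrite !in_set1 => /eqP-> /eqP->; rewrite eqxx.
have : 0 < #|S| by lia.
case/card_gt0P=> x xS.
set S' := [set w in S | adj x w].
set N := [set w | (w != x) && ~~ adj x w].
have hN : #|N| <= k := dense x.
have sub : S \subset (x |: N) :|: S'.
  apply/subsetP=> w wS; rewrite !inE wS /=.
  by case: (w =P x) => //= _; case: (adj x w).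
have h1 := subset_leq_card sub.
have h2 := cardsU (x |: N) S'.
have h3 := cardsU1 x N.
have : n * k.+1 + 1 <= #|S'|.
  move: (leq_subr #|(x |: N) :&: S'| (#|x |: N| + #|S'|)) => h4.
  rewrite mulSn in hS; case: (x \notin N) h3 => /= h3; lia.
case/IH=> D [DS [cl cD]].
have xD : x \notin D.
  apply/negP=> /(subsetP DS); rewrite inE irr; by case/andP.
exists (x |: D); split.
  rewrite subUset sub1set xS (subset_trans DS) //.
  by apply/subsetP=> w; rewrite inE => /andP[].
split; last by rewrite cardsU1 xD cD.
have adjx : forall y, y \in D -> adj x y.
  by move=> y /(subsetP DS); rewrite inE => /andP[].
move=> a b; rewrite !in_setU1 => /orP[/eqP->|aD] /orP[/eqP->|bD] ab.
- by rewrite eqxx in ab.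
- exact: adjx.
- by rewrite sym; apply: adjx.
- exact: cl.
Qed.

Theorem lemma4p12 (k n : nat) (T : finType) (adj : rel T) :
  1 <= k -> simple_graph adj -> uniformly_dense adj k ->
  n * k.+1 + 1 <= #|T| -> grounded adj n k.
Proof.
move=> k1 sg dense hT.
have [|D [_ [cl cD]]] := @clique_exists k _ _ sg dense n [set: T].
  by rewrite cardsT.
exists D; split; first by [].
move=> v; case: (boolP (v \in D)) => vD.
  apply: leq_trans k1; rewrite -(cards1 v); apply: subset_leq_card.
  apply/subsetP=> w; rewrite inE => /andP[wD na]; rewrite inE.
  apply/negPn/negP=> wv; move: na; rewrite (cl v w) //; by rewrite eq_sym.
apply: leq_trans (dense v); apply: subset_leq_card.
apply/subsetP=> w; rewrite !inE => /andP[wD ->]; rewrite andbT.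
by apply/negP=> /eqP wv; rewrite -wv wD in vD.
Qed.
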